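(* Let $R$ be an arbitrary associative ring with $1$, let $A,B\unlhd R$ be two-sided ideals, and let $n\ge 3$. Let $H\le \operatorname{GL}(n,R)$ be any subgroup such that $E(n,A)\le H\le \operatorname{GL}(n,R,A)$. Then $$ C_{\operatorname{GL}(n,R)}\big(H,\operatorname{GL}(n,R,B)\big)=C_{\Omega(A,B)}\big(n,R,(B:A)\big). $$
   Context: Commutators are left-normed: $[x,y]=xyx^{-1}y^{-1}$. For subgroups $F,H$ of a group $G$, the centraliser of $F$ modulo $H$ is $C_G(F,H)=\{g\in G\mid [f,g]\in H \text{ for all } f\in F\}$. For $\xi\in R$ and $1\le i\ne j\le n$, $t_{ij}(\xi)=e+\xi e_{ij}$ is the elementary transvection ($e$ the identity matrix, $e_{ij}$ the standard matrix unit). For an ideal $I\unlhd R$, $E(n,I)$ is the subgroup of $\operatorname{GL}(n,R)$ generated by all $t_{ij}(\xi)$ with $\xi\in I$, $1\le i\neq j\le n$, and $\operatorname{GL}(n,R,I)=\{g\in\operatorname{GL}(n,R)\mid g_{ij}\equiv\delta_{ij}\pmod I\}$ is the principal congruence subgroup (kernel of reduction modulo $I$). For two-sided ideals $A,B$, the ideal quotient is $(B:A)=\{x\in R\mid xA\subseteq B \text{ and } Ax\subseteq B\}$, a two-sided ideal. The relative centraliser of $A$ modulo $B$ is $\operatorname{Cent}_R(A,B)=\{x\in R\mid xa-ax\in B \text{ for all } a\in A\}$. Finally $$C_{\Omega(A,B)}(n,R,(B:A))=\{g\in\operatorname{GL}(n,R)\mid g_{ij}\in(B:A)\text{ and } g_{ii}-g_{jj}\in(B:A)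 \text{ for all } i\ne j,\ \text{and } g_{ii}\in\operatorname{Cent}_R(A,B)\text{ for all } i\}.$$ *)

(* Defs.v *)
From HB Require Import structures.
From mathcomp Require Import all_boot all_order all_algebra.
Set Implicit Arguments. Unset Strict Implicit. Unset Printing Implicit Defensive.
Import GRing.Theory.
Local Open Scope ring_scope.

Section Defs.
Variable R : pzRingType.

Definition is_ideal (I : R -> Prop) : Prop :=
  [/\ I 0,
      (forall x y, I x -> I y -> I (x + y)),
      (forall x, I x -> I (- x)),
      (forall r x, I x -> I (r * x))
    & (forall r x, I x -> I (x * r))].

Definition ideal_quot (B A : R -> Prop) : R -> Prop :=
  fun x => forall a, A a -> B (x * a) /\ B (a * x).

Definition cent_rel (A B : R -> Prop) : R -> Prop :=
  fun x => forall a, A a -> B (x * a - a * x).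

Variable n : nat.

Definition is_inv (g h : 'M[R]_n) : Prop := g *m h = 1%:M /\ h *m g = 1%:M.

Definition GL (g : 'M[R]_n) : Prop := exists h, is_inv g h.

Definition GLcong (I : (R -> Prop)) (g : 'M[R]_n) : Prop :=
  GL g /\ forall i j, I (g i j - (i == j)%:R).

Definition transv (i j : 'I_n) (xi : R) : 'M[R]_n := 1%:M + xi *: delta_mx i j.

Inductive Egrp (I : (R -> Prop)) : 'M[R]_n -> Prop :=
| E_one : Egrp I 1%:M
| E_gen : forall i j xi, i != j -> I xi -> Egrp I (transv i j xi)
| E_mul : forall g h, Egrp I g -> Egrp I h -> Egrp I (g *m h)
| E_inv : forall g h, Egrp I g -> is_inv g h -> Egrp I h.

Definition is_subgroup (H : 'M[R]_n -> Prop) : Prop :=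
  [/\ H 1%:M,
      (forall g h, H g -> H h -> H (g *m h))
    & (forall g, H g -> exists h, is_inv g h /\ H h)].

(* commutator [x,y] = x y x^-1 y^-1 lies in K (inverses are unique) *)
Definition comm_in (K : 'M[R]_n -> Prop) (x y : 'M[R]_n) : Prop :=
  forall xi yi, is_inv x xi -> is_inv y yi -> K (x *m y *m xi *m yi).

Definition centr_mod (F K : 'M[R]_n -> Prop) (g : 'M[R]_n) : Prop :=
  GL g /\ forall f, F f -> comm_in K f g.

Definition C_Omega (A B : (R -> Prop)) (g : 'M[R]_n) : Prop :=
  [/\ GL g,
      (forall i j, i != j -> ideal_quot B A (g i j) /\ ideal_quot B A (g i i - g j j))
    & (forall i, cent_rel A B (g i i))].

End Defs.

(* Main.v *)
Require Import Defs.
From HB Require Import structures.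
From mathcomp Require Import all_boot all_order all_algebra.
From mathcomp Require Import zify.
Import GRing.Theory.
Local Open Scope ring_scope.

Section Aux.
Variable R : pzRingType.
Variable n : nat.
Implicit Types (I : R -> Prop).

Lemma idB I (hI : is_ideal I) x y : I x -> I y -> I (x - y).
Proof. case: hI => _ hD hN _ _ hx hy; exact: hD _ _ hx (hN _ hy). Qed.

Lemma idN I (hI : is_ideal I) x : I (- x) -> I x.
Proof. case: hI => _ _ hN _ _ hx; by rewrite -(opprK x); apply: hN. Qed.

Lemma idsum I (hI : is_ideal I) (P : pred 'I_n) (F : 'I_n -> R) :
  (forall k, P k -> I (F k)) -> I (\sum_(k | P k) F k).
Proof. case: hI => h0 hD _ _ _ hF; exact: big_ind. Qed.

Lemma mx_mulr I (hI : is_ideal I) (M N : 'M[R]_n) :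
  (forall i j, I (M i j)) -> forall i j, I ((M *m N) i j).
Proof.
move=> hM i j; rewrite mxE; apply: idsum => // k _.
by case: hI => _ _ _ _ hr; apply: hr.
Qed.

Lemma mx_mull I (hI : is_ideal I) (M N : 'M[R]_n) :
  (forall i j, I (M i j)) -> forall i j, I ((N *m M) i j).
Proof.
move=> hM i j; rewrite mxE; apply: idsum => // k _.
by case: hI => _ _ _ hl _; apply: hl.
Qed.

Lemma inv_mul (x xi y yi : 'M[R]_n) :
  is_inv x xi -> is_inv y yi -> is_inv (x *m y) (yi *m xi).
Proof.
move=> [h1 h2] [h3 h4]; split.
  by rewrite mulmxA -(mulmxA x) h3 mulmx1 h1.
by rewrite mulmxA -(mulmxA yi) h2 mulmx1 h4.
Qed.

Lemma inv_sym (x y : 'M[R]_n) : is_inv x y -> is_inv y x.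
Proof. by case. Qed.

Lemma third (p q : 'I_n) : (3 <= n)%N -> exists r : 'I_n, r != p /\ r != q.
Proof.
move=> hn.
have [m [hm hp hq]] : exists m, [/\ (m < 3)%N, m != val p & m != val q].
  case: (eqVneq (val p) 0%N) => hp; case: (eqVneq (val q) 0%N) => hq.
  - by exists 1%N; split; lia.
  - case: (eqVneq (val q) 1%N) => hq1; first by exists 2%N; split; lia.
    by exists 1%N; split; lia.
  - case: (eqVneq (val p) 1%N) => hp1; first by exists 2%N; split; lia.
    by exists 1%N; split; lia.
  - by exists 0%N; split; lia.
have hmn : (m < n)%N by lia.
exists (Ordinal hmn); split; apply/eqP => h; [move: hp | move: hq]; by rewrite -h /= eqxx.
Qed.

Lemma delta_mulE (i j : 'I_n) (a : R) (g : 'M[R]_n) k l :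
  ((a *: delta_mx i j) *m g) k l = (k == i)%:R * (a * g j l).
Proof.
rewrite mxE (bigD1 j) //= big1 ?addr0 => [|m /negbTE hm]; rewrite !mxE ?hm ?eqxx ?andbT ?andbF ?mulr0 ?mul0r //.
case: (k == i); by rewrite ?mulr1 ?mul1r ?mulr0 ?mul0r.
Qed.

Lemma mul_deltaE (i j : 'I_n) (a : R) (g : 'M[R]_n) k l :
  (g *m (a *: delta_mx i j)) k l = g k i * a * (l == j)%:R.
Proof.
rewrite mxE (bigD1 i) //= big1 ?addr0 => [|m /negbTE hm]; rewrite !mxE ?hm ?eqxx ?andbF ?mulr0 ?mul0r //=.
case: (l == j); by rewrite ?mulr1 ?mul1r ?mulr0 ?mul0r.
Qed.


Lemma entry_sub (M N : 'M[R]_n) k l : (M - N) k l = M k l - N k l.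
Proof. by rewrite !mxE. Qed.

Lemma entry_sub1 (M : 'M[R]_n) k l : (M - 1%:M) k l = M k l - (k == l)%:R.
Proof. by rewrite !mxE. Qed.

Lemma subsub1 (u v w : R) : (u - v) - (u - w) = w - v.
Proof. by rewrite opprB addrC addrA subrK. Qed.

Lemma subsub2 (u v w : R) : (u - w) - (v - w) = u - v.
Proof. by rewrite opprB addrA subrK. Qed.

Lemma comm_entry (a g : 'M[R]_n) i j : (a *m g - g *m a) i j =
  (a i j * g j j - g i i * a i j) +
  (\sum_(k | k != j) a i k * g k j - \sum_(k | k != i) g i k * a k j).
Proof.
rewrite entry_sub !mxE (bigD1 j) //= [X in _ - X](bigD1 i) //=.
by rewrite opprD addrACA.
Qed.

End Aux.

Theorem theorem1 (R : pzRingType) (A B : R -> Prop) (n : nat)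
  (hA : is_ideal A) (hB : is_ideal B) (hn : (3 <= n)%N)
  (H : 'M[R]_n -> Prop) (hH : is_subgroup H)
  (hEH : forall g, Egrp A g -> H g) (hHA : forall g, H g -> GLcong A g) :
  forall g : 'M[R]_n, centr_mod H (GLcong B) g <-> C_Omega A B g.
Proof.
have hBD : forall x y, B x -> B y -> B (x + y) by case: hB.
have hBN : forall x, B x -> B (- x) by case: hB.
have hBl : forall r x, B x -> B (r * x) by case: hB.
have hBr : forall r x, B x -> B (x * r) by case: hB.
move=> g; split; last first.
  move=> [hGL hoff hcent]; split => // f Hf fi gi hf hg; split.
    exists (g *m (f *m (gi *m fi))).
    apply: inv_mul; [apply: inv_mul; [exact: inv_mul | exact: inv_sym hf] | exact: inv_sym hg].
  have key : f *m g *m fi *m gi - 1%:M = (f *m g - g *m f) *m (fi *m gi).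
    by rewrite mulmxBl !mulmxA -(mulmxA g f fi) hf.1 mulmx1 hg.1.
  move=> i j; rewrite -entry_sub1 key; apply: mx_mulr => // {}i {}j.
  set a := f - 1%:M.
  have ha : forall i j, A (a i j) by move=> p q; rewrite entry_sub1; exact: (hHA f Hf).2.
  have -> : f *m g - g *m f = a *m g - g *m a.
    by rewrite /a mulmxBl mulmxBr mul1mx mulmx1 opprB addrA subrK.
  rewrite comm_entry; apply: (hBD); last first.
    apply: idB => //; apply: idsum => // k hk.
      exact: ((hoff k j hk).1 _ (ha i k)).2.
    by rewrite eq_sym in hk; exact: ((hoff i k hk).1 _ (ha k j)).1.
  case: (eqVneq i j) => [<-|hij].
    by apply: idN => //; rewrite opprB; apply: (hcent).
  have -> : a i j * g j j - g i i * a i j =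
      - (g j j * a i j - a i j * g j j) + (g j j - g i i) * a i j.
    by rewrite mulrBl opprB addrA subrK.
  apply: (hBD); first by apply: (hBN); apply: (hcent).
  by rewrite eq_sym in hij; exact: ((hoff j i hij).2 _ (ha i j)).1.
move=> [hGL hc]; have [gi hg] := hGL.
have F : forall i j, i != j -> forall x, A x -> forall k l,
    B ((k == i)%:R * (x * g j l) - g k i * x * (l == j)%:R).
  move=> i j hij x hx k l.
  have hDD : forall y z : R, (y *: delta_mx i j) *m (z *: delta_mx i j) = 0 :> 'M[R]_n.
    move=> y z; apply/matrixP => p q; rewrite delta_mulE !mxE.
    rewrite eq_sym in hij; rewrite (negbTE hij) /=.
    by rewrite !mulr0.
  pose t := transv i j x; pose ti := transv i j (- x).
  have ht : is_inv t ti.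
    rewrite /t /ti /transv; split;
    rewrite mulmxDr !mulmxDl !mul1mx mulmx1 hDD addr0 -addrA -scalerDl ?addNr ?addrN scale0r addr0 //.
  have Ht : H t by apply: (hEH); exact: E_gen.
  have [_ hcB] := hc t Ht ti gi ht hg.
  have key : t *m g - g *m t = (t *m g *m ti *m gi - 1%:M) *m (g *m t).
    by rewrite mulmxBl mul1mx !mulmxA -(mulmxA _ gi g) hg.2 mulmx1 -(mulmxA _ ti t) ht.2 mulmx1.
  have : B ((t *m g - g *m t) k l).
    by rewrite key; apply: mx_mulr => // p q; rewrite entry_sub1.
  rewrite /t /transv mulmxDl mulmxDr mul1mx mulmx1 opprD addrACA subrr add0r.
  by rewrite entry_sub delta_mulE mul_deltaE.
have third' := fun p q => @third n p q hn.
have F1 : forall j l, j != l -> forall x, A x -> B (x * g j l).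
  move=> j l hjl x hx; have [i [hij _]] := third' j j.
  have := F i j hij x hx i l; rewrite eqxx eq_sym (negbTE hjl) mul1r mulr0 subr0 //.
have F2 : forall k i, k != i -> forall x, A x -> B (g k i * x).
  move=> k i hki x hx; have [j [hji _]] := third' i i.
  rewrite eq_sym in hji.
  have := F i j hji x hx k j; rewrite eqxx (negbTE hki) mul0r mulr1 sub0r.
  exact: idN.
have F3 : forall i j, i != j -> forall x, A x -> B (x * g j j - g i i * x).
  move=> i j hij x hx.
  by have := F i j hij x hx i j; rewrite !eqxx mul1r mulr1.
have Q : forall i j, i != j -> ideal_quot B A (g i i - g j j).
  move=> i j hij x hx; have [r [hri hrj]] := third' i j; split.
    rewrite mulrBl -(@subsub1 R (x * g r r)); apply: idB => //.
      by apply: (F3) => //; rewrite eq_sym.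
    by apply: (F3) => //; rewrite eq_sym.
  rewrite mulrBr -(@subsub2 R _ _ (g r r * x)); apply: idB => //; exact: F3.
split => //.
  move=> i j hij; split; last exact: Q.
  move=> x hx; split; [exact: (F2) | exact: (F1)].
move=> i x hx; have [j [hji _]] := third' i i.
rewrite -(@subsub1 R (x * g j j)); apply: idB => //.
  by have := (Q j i hji x hx).2; rewrite mulrBr.
by apply: (F3) => //; rewrite eq_sym.
Qed.
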